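(* Let $F\subseteq\mathcal{O}_{C,O}(\tau)$ be the face given by $x_b=0$ for some $b\in C\setminus\{\hat{0}\}$, where $P_\tau=C\sqcup O$ is a $k$-decomposition. If $b\in Y^i$, then $F$ is affinely isomorphic to $\mathcal{O}_{\tilde{C},O}(\tilde{\tau})$, where \[ \tilde{\tau}=(\tau_1,\dots,\tau_{i-1},\tau_i-1,\tau_{i+1},\dots,\tau_\ell) \] and $\tilde{C}=C\setminus\{b\}$. If $\tau_i-1=0$, this zero entry is omitted from $\tilde{\tau}$ (i.e. the rank level disappears).
   Context: For $\tau=(\tau_1,\dots,\tau_\ell)\in\mathbb{Z}_{>0}^\ell$, $P_\tau$ is the maximal ranked poset having $\tau_i$ elements in rank $i$, where any two elements of distinct ranks are comparable; it is extended by a minimum $\hat{0}$ and a maximum $\hat{1}$. Let $Y^i$ denote the set of elements of rank $i$, with $Y^0=\{\hat{0}\}$ and $Y^{\ell+1}=\{\hat{1}\}$. For $0\le k\le\ell$, the $k$-decomposition is $P_\tau=C\sqcup O$ with $C=\bigcup_{i=0}^k Y^i$ and $O=\bigcup_{i=k+1}^{\ell+1}Y^i$. The chain-order polytope $\mathcal{O}_{C,O}(\tau)$ is defined by: $x_{\hat{0}}=0$, $x_{\hat{1}}=1$; $0\le x_p$ for each $p\in C$; $x_a\le x_b$ for each covering relation $a\prec b$ with $a,b\in O$; and $x_{p_1}+\dots+x_{p_k}\le x_{q}$ for any choice of $p_j\in Y^j$ ($1\le j\le k$) and $q\in Y^{k+1}$. Two polytopes are identified up to affine isomorphism. *)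

(* Defs.v *)
From HB Require Import structures.
From mathcomp Require Import all_boot all_order all_algebra.
Set Implicit Arguments. Unset Strict Implicit. Unset Printing Implicit Defensive.
Import Order.TTheory GRing.Theory Num.Theory.
Local Open Scope ring_scope.

(* Elements of P_tau other than \hat0 and \hat1: an element of rank i+1
   (i : 'I_(size tau), i.e. ranks 1..l) together with its position among the
   tau_{i+1} elements of that rank.  The coordinates x_{\hat0} = 0 and
   x_{\hat1} = 1 are fixed, so points are functions elt tau -> R. *)
Definition elt (tau : seq nat) := {i : 'I_(size tau) & 'I_(nth 0%N tau i)}.

(* rank-index (0-based) of an element: the element lies in Y^(rk p + 1) *)
Definition rk (tau : seq nat) (p : elt tau) : nat := val (tag p).

(* The chain-order polytope O_{C,O}(tau) for the k-decomposition
   C = Y^0 u ... u Y^k,  O = Y^(k+1) u ... u Y^(l+1). *)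
Definition chain_order_polytope (R : realFieldType) (tau : seq nat) (k : nat)
    (x : elt tau -> R) : Prop :=
  (forall p : elt tau, (rk p < k)%N -> 0 <= x p) /\
  (forall a b : elt tau, (k <= rk a)%N -> rk b = (rk a).+1 -> x a <= x b) /\
  (forall a : elt tau, (k <= rk a)%N -> (rk a).+1 = size tau -> x a <= 1) /\
  (forall c : 'I_k -> elt tau, (forall j : 'I_k, rk (c j) = val j) ->
     (forall q : elt tau, rk q = k -> \sum_(j < k) x (c j) <= x q) /\
     (k = size tau -> \sum_(j < k) x (c j) <= 1)).

Definition affine_map (R : pzRingType) (T1 T2 : finType)
    (f : (T1 -> R) -> (T2 -> R)) : Prop :=
  exists (M : T2 -> T1 -> R) (c : T2 -> R),
    forall x t, f x t = c t + \sum_(s : T1) M t s * x s.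

Definition affinely_isomorphic (R : pzRingType) (T1 T2 : finType)
    (A : (T1 -> R) -> Prop) (B : (T2 -> R) -> Prop) : Prop :=
  exists (f : (T1 -> R) -> (T2 -> R)) (g : (T2 -> R) -> (T1 -> R)),
    [/\ affine_map f, affine_map g,
        (forall x, A x -> B (f x)), (forall y, B y -> A (g y)) &
        ((forall x, A x -> g (f x) = x) /\ (forall y, B y -> f (g y) = y))].

Definition tau_tilde (tau : seq nat) (i : nat) : seq nat :=
  if nth 0%N tau i == 1%N then take i tau ++ drop i.+1 tau
  else set_nth 0%N tau i (nth 0%N tau i).-1.

(* tilde C = C \ {b} is again a decomposition of P_{tilde tau}, of index
   k-1 if the level of b disappears and k otherwise *)
Definition k_tilde (tau : seq nat) (k i : nat) : nat :=
  if nth 0%N tau i == 1%N then k.-1 else k.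

(* Main.v *)
Require Import Defs.
From mathcomp Require Import all_boot all_order all_algebra.
From mathcomp Require Import zify.
From Stdlib Require Import FunctionalExtensionality.
Set Implicit Arguments. Unset Strict Implicit. Unset Printing Implicit Defensive.
Import Order.TTheory GRing.Theory Num.Theory.

Definition pos (tau : seq nat) (p : elt tau) : nat := val (tagged p).

Lemma elt_eq tau (p q : elt tau) : rk p = rk q -> pos p = pos q -> p = q.
Proof.
case: p => [[r Hr] [j Hj]]; case: q => [[r' Hr'] [j' Hj']]; rewrite /rk /pos /=.
move=> er ej; subst r' j'.
have -> : Hr' = Hr by apply: bool_irrelevance.
have -> : Hj' = Hj by apply: bool_irrelevance.
done.
Qed.

Definition mk tau r j (Hr : (r < size tau)%N) (Hj : (j < nth 0%N tau r)%N) : elt tau :=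
  existT _ (Ordinal Hr) (Ordinal Hj).

Lemma rk_mk tau r j Hr Hj : rk (@mk tau r j Hr Hj) = r. Proof. by []. Qed.
Lemma pos_mk tau r j Hr Hj : pos (@mk tau r j Hr Hj) = j. Proof. by []. Qed.
Lemma rk_lt tau (p : elt tau) : (rk p < size tau)%N. Proof. exact: ltn_ord. Qed.
Lemma pos_lt tau (p : elt tau) : (pos p < nth 0%N tau (rk p))%N. Proof. exact: ltn_ord. Qed.

Lemma bumpE h r : bump h r = if (h <= r)%N then r.+1 else r.
Proof. by rewrite /bump; case: leqP; rewrite ?add1n ?add0n. Qed.
Lemma unbumpE h r : unbump h r = if (h < r)%N then r.-1 else r.
Proof. by rewrite /unbump; case: ltnP; rewrite ?subn1 ?subn0. Qed.

Section Emb.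
Variables (tau : seq nat) (b : elt tau).
Definition i0 := rk b.
Definition remv := (nth 0%N tau i0 == 1%N).
Definition ttau := tau_tilde tau i0.

Lemma i0_lt : (i0 < size tau)%N. Proof. exact: rk_lt. Qed.
Lemma nthi0 : (0 < nth 0%N tau i0)%N.
Proof. have := pos_lt b; rewrite /i0; lia. Qed.

Lemma size_tt : size ttau = if remv then (size tau).-1 else size tau.
Proof.
rewrite /ttau /tau_tilde -/i0 -/remv; have := i0_lt; case: remv => H.
  rewrite size_cat size_take H size_drop; lia.
by rewrite size_set_nth; lia.
Qed.

Lemma nth_tt r : nth 0%N ttau r =
  if remv then nth 0%N tau (bump i0 r) else
  if r == i0 then (nth 0%N tau i0).-1 else nth 0%N tau r.
Proof.
rewrite /ttau /tau_tilde -/i0 -/remv; have := i0_lt; case: remv => H.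
  rewrite nth_cat size_take H bumpE nth_drop; case: (ltnP r i0) => Hr.
    by rewrite nth_take // leqNgt Hr.
  congr nth; lia.
by rewrite nth_set_nth /=.
Qed.

Definition er r := if remv then bump i0 r else r.
Definition ep r j := if remv then j else if r == i0 then bump (pos b) j else j.

Lemma er_lt r : (r < size ttau)%N -> (er r < size tau)%N.
Proof.
rewrite size_tt /er; have := i0_lt; case: remv => // H; rewrite bumpE; case: (leqP i0 r); lia.
Qed.

Lemma ep_lt r j : (j < nth 0%N ttau r)%N -> (ep r j < nth 0%N tau (er r))%N.
Proof.
rewrite nth_tt /er /ep; case: remv => //; case: eqP => // -> H.
rewrite bumpE; case: (leqP (pos b) j); lia.
Qed.

Definition emb (t : elt ttau) : elt tau :=
  let: existT r j := t in mk (er_lt (ltn_ord r)) (ep_lt (ltn_ord j)).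

Lemma rk_emb t : rk (emb t) = er (rk t). Proof. by case: t. Qed.
Lemma pos_emb t : pos (emb t) = ep (rk t) (pos t). Proof. by case: t. Qed.

Lemma emb_inj : injective emb.
Proof.
move=> t1 t2 E.
have E1 : rk t1 = rk t2.
  have := congr1 (@rk _) E; rewrite !rk_emb /er; case: remv => //.
  by move/(congr1 (unbump i0)); rewrite !bumpK.
apply: elt_eq => //.
have := congr1 (@pos _) E; rewrite !pos_emb E1 /ep; case: remv => //; case: eqP => // _.
by move/(congr1 (unbump (pos b))); rewrite !bumpK.
Qed.

Lemma emb_neq t : emb t != b.
Proof.
apply/eqP => E.
have Er := congr1 (@rk _) E; have Ep := congr1 (@pos _) E.
move: Er Ep; rewrite rk_emb pos_emb /er /ep -/i0; case: remv.
  by move=> H; have := neq_bump i0 (rk t); rewrite H eqxx.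
case: eqP => // _ _ H; have := neq_bump (pos b) (pos t); rewrite H eqxx //.
Qed.

Lemma rem_b s : remv -> rk s = i0 -> s = b.
Proof.
move=> Hr Hs; apply: elt_eq => //.
have := pos_lt s; have := pos_lt b; rewrite -/i0 Hs; move/eqP: Hr => ->; lia.
Qed.

Lemma emb_surj s : s != b -> exists t, emb t = s.
Proof.
move=> Hs.
case Hrem : remv.
  have Hne : rk s != i0 by apply/eqP => /(rem_b Hrem) E; rewrite E eqxx in Hs.
  have Hr : (unbump i0 (rk s) < size ttau)%N.
    rewrite size_tt Hrem unbumpE; have := rk_lt s; have := i0_lt; move: Hne.
    case: (ltnP i0 (rk s)) => ? ? ?; move/eqP; lia.
  have Hj : (pos s < nth 0%N ttau (unbump i0 (rk s)))%N.
    by rewrite nth_tt Hrem unbumpK //; exact: pos_lt.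
  exists (mk Hr Hj); apply: elt_eq; rewrite ?rk_emb ?pos_emb /er /ep Hrem //=.
  by rewrite unbumpK.
have Hr : (rk s < size ttau)%N by rewrite size_tt Hrem; exact: rk_lt.
case Hsi : (rk s == i0).
  have Hne : pos s != pos b.
    apply/eqP => E; have : s = b by apply: elt_eq => //; apply/eqP.
    by move=> E'; rewrite E' eqxx in Hs.
  have Hj : (unbump (pos b) (pos s) < nth 0%N ttau (rk s))%N.
    rewrite nth_tt Hrem Hsi unbumpE; have := pos_lt s; move/eqP: Hsi => ->.
    have := pos_lt b; rewrite -/i0; move: Hne; case: (ltnP (pos b) (pos s)) => ? /eqP ?; lia.
  exists (mk Hr Hj); apply: elt_eq; rewrite ?rk_emb ?pos_emb /er /ep Hrem ?Hsi //=.
  by rewrite unbumpK //= eq_sym.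
have Hj : (pos s < nth 0%N ttau (rk s))%N by rewrite nth_tt Hrem Hsi; exact: pos_lt.
exists (mk Hr Hj); apply: elt_eq; rewrite ?rk_emb ?pos_emb /er /ep Hrem ?Hsi //=.
Qed.

End Emb.

Local Open Scope ring_scope.
Section Main.
Variables (R : realFieldType) (tau : seq nat) (b : elt tau) (k : nat).
Hypothesis Hk : (i0 b < k)%N.

Local Notation ttau := (ttau b).
Local Notation emb := (@emb tau b).
Local Notation er := (er b).
Local Notation remv := (remv b).
Local Notation i0 := (i0 b).
Definition kt := k_tilde tau k i0.
Lemma ktE : kt = if remv then k.-1 else k. Proof. by []. Qed.

Lemma ka r : (er r < k)%N = (r < kt)%N.
Proof. rewrite ktE /er; case: remv => //; rewrite bumpE; case: (leqP i0 r) => ?; apply/idP/idP; lia. Qed.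
Lemma kb r : (k <= er r)%N = (kt <= r)%N.
Proof. by rewrite leqNgt ka -leqNgt. Qed.
Lemma kc r1 r2 : (kt <= r1)%N -> (er r2 == (er r1).+1) = (r2 == r1.+1).
Proof. rewrite ktE /er; case: remv => // ?; rewrite !bumpE; case: (leqP i0 r1) => ?; case: (leqP i0 r2) => ?; apply/eqP/eqP; lia. Qed.
Lemma kd r1 : (kt <= r1)%N -> ((er r1).+1 == size tau) = (r1.+1 == size ttau).
Proof. rewrite ktE size_tt /er; have := i0_lt b; case: remv => // ? ?; rewrite !bumpE; case: (leqP i0 r1) => ?; apply/eqP/eqP; lia. Qed.
Lemma ke r : (er r == k) = (r == kt).
Proof. rewrite ktE /er; case: remv => //; rewrite !bumpE; case: (leqP i0 r) => ?; apply/eqP/eqP; lia. Qed.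
Lemma kf : (k == size tau) = (kt == size ttau).
Proof. rewrite ktE size_tt; have := i0_lt b; case: remv => // ?; apply/eqP/eqP; lia. Qed.

Definition gmap (y : elt ttau -> R) (s : elt tau) : R := \sum_t (emb t == s)%:R * y t.

Lemma gE_emb y t : gmap y (emb t) = y t.
Proof.
rewrite /gmap (bigD1 t) //= eqxx mul1r big1 ?addr0 // => s /negbTE Hs.
by rewrite (inj_eq (@emb_inj _ b)) Hs mul0r.
Qed.

Lemma gE_b y : gmap y b = 0.
Proof. by rewrite /gmap big1 // => t _; rewrite (negbTE (emb_neq t)) mul0r. Qed.

Lemma fwd (x : elt tau -> R) : chain_order_polytope k x -> x b = 0 ->
  chain_order_polytope kt (fun t => x (emb t)).
Proof.
move=> [H1 [H2 [H3 H4]]] Hb.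
split; [|split; [|split]].
- by move=> p Hp; apply: H1; rewrite rk_emb ka.
- move=> a a' Ha Ha'; apply: H2; rewrite ?rk_emb ?kb //.
  by apply/eqP; rewrite kc // Ha'.
- move=> a Ha Ha'; apply: H3; rewrite ?rk_emb ?kb //.
  by apply/eqP; rewrite kd // Ha'.
have Hi0 := i0_lt b.
move=> c Hc; move: (kf); rewrite ktE in c Hc *.
case Hrem : remv in c Hc *.
- move=> Hkf.
  pose i0' : 'I_k := Ordinal Hk.
  pose c' : 'I_k -> elt tau := fun j => if unlift i0' j is Some j' then emb (c j') else b.
  have Hc' : forall j, rk (c' j) = j.
    move=> j; rewrite /c'; case: unliftP => [j' ->|->] //=.
    by rewrite rk_emb Hc /er Hrem.
  have Hsum : \sum_(j < k) x (c' j) = \sum_(j < k.-1) x (emb (c j)).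
    rewrite (bigD1_ord i0') //= /c' unlift_none Hb add0r.
    by apply: eq_bigr => j _; rewrite liftK.
  have [Hq Hs] := H4 c' Hc'.
  split.
    move=> q Hq'; rewrite -Hsum; apply: Hq.
    by rewrite rk_emb /er Hrem bumpE Hq'; case: (leqP i0 k.-1); lia.
  by move=> Hks; rewrite -Hsum; apply: Hs; apply/eqP; rewrite Hkf; apply/eqP.
- move=> Hkf.
  pose c' : 'I_k -> elt tau := fun j => emb (c j).
  have Hc' : forall j, rk (c' j) = j by move=> j; rewrite /c' rk_emb Hc /er Hrem.
  have [Hq Hs] := H4 c' Hc'.
  split.
    move=> q Hq'; apply: Hq; by rewrite rk_emb /er Hrem.
  by move=> Hks; apply: Hs; apply/eqP; rewrite Hkf; apply/eqP.
Qed.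


Lemma bwd (y : elt ttau -> R) : chain_order_polytope kt y ->
  chain_order_polytope k (gmap y).
Proof.
move=> [H1 [H2 [H3 H4]]].
have Hi0 := i0_lt b.
have rkb : rk b = i0 by [].
have nb : forall s, (k <= rk s)%N -> s != b.
  by move=> s Hs; apply/eqP => E; move: Hs; rewrite E rkb leqNgt Hk.
split; [|split; [|split]].
- move=> p Hp; case: (eqVneq p b) => [->|/emb_surj [t Et]]; first by rewrite gE_b.
  by rewrite -Et gE_emb; apply: H1; rewrite -ka -rk_emb Et.
- move=> a a' Ha Ha'.
  have Ha'k : (k <= rk a')%N by rewrite Ha'; exact: leqW.
  have [t Et] := emb_surj (nb _ Ha).
  have [t' Et'] := emb_surj (nb _ Ha'k).
  have Ht : (kt <= rk t)%N by rewrite -kb -rk_emb Et.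
  subst a a'; rewrite !gE_emb; apply: H2 => //.
  by apply/eqP; rewrite -(kc _ Ht) -!rk_emb Ha'.
- move=> a Ha Ha'.
  have [t Et] := emb_surj (nb _ Ha).
  have Ht : (kt <= rk t)%N by rewrite -kb -rk_emb Et.
  subst a; rewrite !gE_emb; apply: H3 => //.
  by apply/eqP; rewrite -(kd Ht) -!rk_emb Ha'.
move=> c Hc; move: kf H4; rewrite ktE.
case Hrem : remv => Hkf H4.
- pose i0' : 'I_k := Ordinal Hk.
  have Hci : c i0' = b by apply: rem_b => //; rewrite Hc.
  have Hex : forall j' : 'I_k.-1, exists t, emb t = c (lift i0' j').
    move=> j'; apply: emb_surj; apply/eqP => E.
    have := Hc (lift i0' j'); rewrite E rkb /= => Ejb.
    by have := neq_bump i0 j'; rewrite -Ejb eqxx.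
  have [ct Hct] := fin_all_exists Hex.
  have Hrct : forall j', rk (ct j') = j'.
    move=> j'; have := congr1 (@rk _) (Hct j'); rewrite rk_emb Hc /= /er Hrem.
    by move/(congr1 (unbump i0)); rewrite !bumpK.
  have Hsum : \sum_(j < k) gmap y (c j) = \sum_(j < k.-1) y (ct j).
    rewrite (bigD1_ord i0') //= Hci gE_b add0r.
    by apply: eq_bigr => j _; rewrite -Hct gE_emb.
  have [Hq Hs] := H4 ct Hrct.
  split.
    move=> q Hq'.
    have [qt Eq] := emb_surj (nb q (eq_leq (esym Hq'))).
    rewrite Hsum -Eq gE_emb; apply: Hq.
    have := ke (rk qt); rewrite -rk_emb Eq Hq' eqxx ktE Hrem => /esym/eqP //.
  by move=> Hks; rewrite Hsum; apply: Hs; apply/eqP; rewrite -Hkf; apply/eqP.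
- have Hn2 : (1 < nth 0%N tau i0)%N.
    by have := nthi0 b; move: Hrem; rewrite /remv; case: eqP => //; lia.
  have Hj' : ((if pos b == 0%N then 1%N else 0%N) < nth 0%N tau i0)%N.
    by case: eqP; lia.
  pose b' := mk Hi0 Hj'.
  have Hb'b : b' != b.
    apply/eqP => E; have := congr1 (@pos _) E; rewrite pos_mk.
    by case: eqP => [->|]; lia.
  have [bt Ebt] := emb_surj Hb'b.
  pose c' j := if c j == b then b' else c j.
  have Hc'b : forall j, c' j != b.
    move=> j; rewrite /c'; case: (c j =P b) => [_|/eqP //]; exact: Hb'b.
  have [ct Hct] := fin_all_exists (fun j => emb_surj (Hc'b j)).
  have Hrct : forall j, rk (ct j) = j.
    move=> j; have := congr1 (@rk _) (Hct j); rewrite rk_emb /er Hrem => ->.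
    by rewrite /c'; case: eqP => [E|_]; rewrite -Hc ?E.
  have Hle : \sum_(j < k) gmap y (c j) <= \sum_(j < k) y (ct j).
    apply: ler_sum => j _; rewrite -(gE_emb y (ct j)) Hct /c'; case: (c j =P b) => [->|_] //.
    rewrite gE_b -Ebt gE_emb; apply: H1.
    by rewrite -ka -rk_emb Ebt rk_mk.
  have [Hq Hs] := H4 ct Hrct.
  split.
    move=> q Hq'.
    have [qt Eq] := emb_surj (nb q (eq_leq (esym Hq'))).
    apply: (le_trans Hle); rewrite -Eq gE_emb; apply: Hq.
    by have := rk_emb qt; rewrite Eq Hq' /er Hrem.
  by move=> Hks; apply: (le_trans Hle); apply: Hs; apply/eqP; rewrite -Hkf; apply/eqP.
Qed.
End Main.

Theorem proposition3p6 (R : realFieldType) (tau : seq nat) (k : nat)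
    (b : elt tau) :
  all (fun t => 0 < t)%N tau ->
  (k <= size tau)%N ->
  (rk b < k)%N ->
  affinely_isomorphic
    (fun x : elt tau -> R => chain_order_polytope k x /\ x b = 0)
    (fun y : elt (tau_tilde tau (rk b)) -> R =>
       chain_order_polytope (k_tilde tau k (rk b)) y).
Proof.
move=> _ _ Hk.
exists (fun x t => x (@emb tau b t)), (@gmap R tau b).
split.
- exists (fun t s => (s == @emb tau b t)%:R), (fun _ => 0) => x t.
  rewrite add0r (bigD1 (@emb tau b t)) //= eqxx mul1r big1 ?addr0 // => s /negbTE ->.
  by rewrite mul0r.
- exists (fun s t => (@emb tau b t == s)%:R), (fun _ => 0) => y s.
  by rewrite add0r.
- by move=> x [Hx Hb]; apply: (@fwd R tau b k Hk).
- by move=> y Hy; split; [apply: (@bwd R tau b k Hk) | apply: gE_b].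
split.
- move=> x [_ Hb]; apply: functional_extensionality => s.
  case: (eqVneq s b) => [->|/emb_surj [t <-]]; first by rewrite gE_b Hb.
  by rewrite gE_emb.
- move=> y _; apply: functional_extensionality => t.
  by rewrite gE_emb.
Qed.
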